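(* For every finite forest $\mathcal{F}$ with at least one edge, the non-cover complex $\mathcal{NC}(\mathcal{F})$ is either contractible or homotopy equivalent to a sphere $\mathbb{S}^d$ for some $d\ge -1$ (with the convention $\mathbb{S}^{-1}=\emptyset$).
   Context: For a finite simple graph $H$, the non-cover complex $\mathcal{NC}(H)$ is the simplicial complex whose simplices are the subsets $S\subseteq V(H)$ such that $V(H)\setminus S$ contains both endpoints of some edge of $H$. Homotopy types refer to geometric realizations. *)

(* Defs.v *)
From HB Require Import structures.
From mathcomp Require Import all_boot all_order all_algebra.
From mathcomp Require Import boolp classical_sets reals topology function_spaces.
Set Implicit Arguments. Unset Strict Implicit. Unset Printing Implicit Defensive.
Import Order.TTheory GRing.Theory Num.Theory.
Import numFieldTopology.Exports.
Local Open Scope classical_set_scope.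
Local Open Scope ring_scope.

Definition simple_graph (V : finType) (e : rel V) : Prop :=
  symmetric e /\ irreflexive e.

Definition has_cycle (V : finType) (e : rel V) : Prop :=
  exists p : seq V, [/\ (3 <= size p)%N, uniq p & cycle e p].

Definition forest (V : finType) (e : rel V) : Prop :=
  simple_graph e /\ ~ has_cycle e.

Definition has_edge (V : finType) (e : rel V) : Prop :=
  exists u v, e u v.

Definition non_cover_complex (V : finType) (e : rel V) : {set V} -> bool :=
  fun S => [exists u, exists v, [&& e u v, u \notin S & v \notin S]].

(** Geometric realization of an (abstract) simplicial complex, given by its
    set of faces, on the finite vertex set V, inside the product space V -> R:
    points are barycentric coordinate vectors whose support is a face. *)
Definition geom_realization (R : realType) (V : finType)
    (Delta : {set V} -> bool) : set {ptws V -> R} :=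
  [set x | [/\ (forall v, 0 <= x v), \sum_(v : V) x v = 1
             & Delta (finset (fun v => x v != 0))]].

Definition cont_map {X Y : topologicalType} (A : set X) (B : set Y)
    (f : X -> Y) : Prop :=
  {within A, continuous f} /\ (forall x, A x -> B (f x)).

Definition homotopic (R : realType) {X Y : topologicalType} (A : set X)
    (B : set Y) (f g : X -> Y) : Prop :=
  exists H : R * X -> Y,
    [/\ cont_map ((`[0, 1]%classic : set R) `*` A) B H,
        (forall x, A x -> H (0, x) = f x) &
        (forall x, A x -> H (1, x) = g x)].

Definition homotopy_equivalent (R : realType) {X Y : topologicalType}
    (A : set X) (B : set Y) : Prop :=
  exists (f : X -> Y) (g : Y -> X),
    [/\ cont_map A B f, cont_map B A g,
        homotopic R A A (g \o f) id & homotopic R B B (f \o g) id].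

Definition contractible (R : realType) {X : topologicalType} (A : set X) : Prop :=
  homotopy_equivalent R A [set (0 : R)].

(** The Euclidean unit sphere S^(k-1) in R^k (k = d+1); for k = 0 it is empty,
    matching the convention S^(-1) = empty. *)
Definition sphere (R : realType) (k : nat) : set {ptws 'I_k -> R} :=
  [set x | \sum_(i < k) x i ^+ 2 = 1].

Arguments geom_realization R {V} Delta.
Arguments sphere R k : clear implicits.

(* Main.v *)
Require Import Defs.
From HB Require Import structures.
From mathcomp Require Import all_boot all_order all_algebra.
From mathcomp Require Import boolp classical_sets reals topology function_spaces.
From mathcomp Require Import normedtype realfun.
From mathcomp Require Import ring lra zify.
Import numFieldTopology.Exports.
Import Order.TTheory GRing.Theory Num.Theory.
Set Implicit Arguments. Unset Strict Implicit. Unset Printing Implicit Defensive.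
Local Open Scope classical_set_scope.
Local Open Scope ring_scope.
Definition cw {X Y : topologicalType} (S : set X) (f : X -> Y) :=
  forall x, S x -> f @ within S (nbhs x) --> f x.

Section CW.
Context {X Y Z : topologicalType}.

Lemma cwE (S : set X) (f : X -> Y) : cw S f <-> {within S, continuous f}.
Proof.
rewrite continuous_subspace_in; split.
  move=> H x; rewrite inE => Sx; rewrite /continuous_at.
  change (f @ (@nbhs_subspace _ S x) --> f x).
  by rewrite -(nbhs_subspace_in Sx); exact: H.
move=> H x Sx; have := H x; rewrite inE => /(_ Sx).
rewrite /continuous_at.
change (f @ (@nbhs_subspace _ S x) --> f x -> f @ within S (nbhs x) --> f x).
by rewrite -(nbhs_subspace_in Sx).
Qed.

Lemma cw_pt (S : set X) (f : X -> Y) :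
  (forall x, S x -> {for x, continuous f}) -> cw S f.
Proof. move=> H x Sx; apply: cvg_trans (H x Sx); exact: cvg_fmap2 (cvg_within _). Qed.

Lemma cw_glob (S : set X) (f : X -> Y) : continuous f -> cw S f.
Proof. by move=> H; apply: cw_pt => x _; exact: H. Qed.

Lemma within_to (F : set_system Y) (B : set Y) (y : Y) : Filter F ->
  F --> y -> F B -> F --> within B (nbhs y).
Proof.
move=> FF Fy FB P /= nP; have : F (fun z => B z -> P z) by exact: Fy nP.
by move=> H; apply: filterS2 FB H => z Bz /(_ Bz).
Qed.

Lemma cw_comp (S : set X) (B : set Y) (f : X -> Y) (g : Y -> Z) :
  cw S f -> (forall x, S x -> B (f x)) -> cw B g -> cw S (g \o f).
Proof.
move=> cf SB cg x Sx.
have h1 : f @ within S (nbhs x) --> within B (nbhs (f x)).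
  apply: within_to => //; first exact: cf.
  rewrite /= /fmap /=; apply: filterS (withinT S (@nbhs_filter X x)).
  by move=> z /SB.
exact: cvg_trans (cvg_fmap2 h1) (cg _ (SB _ Sx)).
Qed.

Lemma cw_eq (S : set X) (f g : X -> Y) :
  (forall x, S x -> f x = g x) -> cw S f -> cw S g.
Proof.
move=> fg cf x Sx; rewrite -(fg x Sx).
apply: cvg_trans (cf x Sx).
apply: fmap_within_eq => // y; rewrite inE => Sy; by rewrite fg.
Qed.

Lemma cw_sub (S S' : set X) (f : X -> Y) : S' `<=` S -> cw S f -> cw S' f.
Proof.
move=> sub cf x S'x; apply: cvg_trans (cf x (sub _ S'x)).
move=> P /= H; move: H; rewrite !nbhs_simpl /= /within /=.
apply: filterS => z Hz S'z; exact: Hz (sub _ S'z).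
Qed.

Lemma cw_pair (S : set X) (f : X -> Y) (g : X -> Z) :
  cw S f -> cw S g -> cw S (fun x => (f x, g x)).
Proof. move=> cf cg x Sx; exact: cvg_pair (cf x Sx) (cg x Sx). Qed.

Lemma cw_paste (S C1 C2 : set X) (f : X -> Y) :
  closed C1 -> closed C2 -> S `<=` C1 `|` C2 ->
  cw (S `&` C1) f -> cw (S `&` C2) f -> cw S f.
Proof.
move=> c1 c2 SC h1 h2 x Sx P /= nP.
have K1 : C1 x -> nbhs x (fun z => (S `&` C1) z -> P (f z)) by move=> C1x; exact: h1 x (conj Sx C1x) _ nP.
have K2 : C2 x -> nbhs x (fun z => (S `&` C2) z -> P (f z)) by move=> C2x; exact: h2 x (conj Sx C2x) _ nP.
have O1 : ~ C1 x -> nbhs x (~` C1).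
  move=> nC; apply: open_nbhs_nbhs; split => //; exact: closed_openC.
have O2 : ~ C2 x -> nbhs x (~` C2).
  move=> nC; apply: open_nbhs_nbhs; split => //; exact: closed_openC.
rewrite /within /=.
have [C1x|nC1x] := pselect (C1 x); have [C2x|nC2x] := pselect (C2 x).
- apply: filterS2 (K1 C1x) (K2 C2x) => z H1 H2 Sz.
  by case: (SC _ Sz) => Cz; [exact: H1|exact: H2].
- apply: filterS2 (K1 C1x) (O2 nC2x) => z H1 H2 Sz.
  by case: (SC _ Sz) => Cz; [exact: H1|exfalso; exact: (H2 Cz)].
- apply: filterS2 (K2 C2x) (O1 nC1x) => z H1 H2 Sz.
  by case: (SC _ Sz) => Cz; [exfalso; exact: (H2 Cz)|exact: H1].
- by case: (SC _ Sx).
Qed.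

End CW.

Section RealHelpers.
Context {R : realType}.
Context {T : topologicalType}.
Implicit Types f g : T -> R.
Lemma cD f g x : {for x, continuous f} -> {for x, continuous g} -> {for x, continuous (fun y => f y + g y)}.
Proof. move=> a b. exact: (@cvgD R R^o T _ _ f g _ _ a b). Qed.
Lemma cM f g x : {for x, continuous f} -> {for x, continuous g} -> {for x, continuous (fun y => f y * g y)}.
Proof. move=> a b; exact: (@cvgM R T _ _ f g _ _ a b). Qed.
Lemma cV f x : f x != 0 -> {for x, continuous f} -> {for x, continuous (fun y => (f y)^-1)}.
Proof. move=> a b; exact: (@cvgV R T _ _ f _ a b). Qed.
Lemma cN f x : {for x, continuous f} -> {for x, continuous (fun y => - f y)}.
Proof. move=> a. exact: (@cvgN R R^o T _ _ f _ a). Qed.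
Lemma cMax f g x : {for x, continuous f} -> {for x, continuous g} -> {for x, continuous (fun y => Num.max (f y) (g y))}.
Proof. move=> a b. exact: (@continuous_max _ _ f g x a b). Qed.
Lemma cSqrt f x : {for x, continuous f} -> {for x, continuous (fun y => Num.sqrt (f y))}.
Proof. move=> cf. apply: (continuous_comp cf). exact: sqrt_continuous. Qed.
Lemma cC (c : R) x : {for x, continuous (fun _ : T => c)}.
Proof. exact: cvg_cst. Qed.
Lemma cB f g x : {for x, continuous f} -> {for x, continuous g} -> {for x, continuous (fun y => f y - g y)}.
Proof. by move=> a b; apply: cD => //; apply: cN. Qed.
Lemma cSum (I : Type) (r : seq I) (P : pred I) (F : I -> T -> R) x :
  (forall i, {for x, continuous (F i)}) ->
  {for x, continuous (fun y => \sum_(i <- r | P i) F i y)}.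
Proof.
move=> H; elim: r => [|a r IH].
  have -> : (fun y => \sum_(i <- [::] | P i) F i y) = (fun _ => 0).
    by apply: funext => y; rewrite big_nil.
  exact: cC.
have [Pa|nPa] := boolP (P a).
  have -> : (fun y => \sum_(i <- a :: r | P i) F i y) =
            (fun y => F a y + \sum_(i <- r | P i) F i y).
    by apply: funext => y; rewrite big_cons Pa.
  exact: cD.
have -> : (fun y => \sum_(i <- a :: r | P i) F i y) =
            (fun y => \sum_(i <- r | P i) F i y).
  by apply: funext => y; rewrite big_cons (negbTE nPa).
exact: IH.
Qed.
End RealHelpers.

Lemma ptws_cvg (R : realType) (I : Type) (X : Type) (F : set_system X) (FF : Filter F)
   (h : X -> {ptws I -> R}) (g : {ptws I -> R}) :
  (forall i, (fun x => h x i) @ F --> g i) -> h @ F --> g.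
Proof.
move=> H.
have := (@cvg_sup _ _ (fun i => Topological.class
    (initial_topology (fun f : (forall i, (fun _ => R) i) => f i))) (h @ F) g _).
move=> [_ Hs]; apply: Hs => i.
apply/cvg_image; first by rewrite eqEsubset; split => // v _; exists (fun _ => v).
apply: cvg_trans (H i).
move=> W /= FW. exists ((fun f : {ptws I -> R} => f i) @^-1` W) => //.
rewrite image_preimage //. rewrite eqEsubset; split => // v _; exists (fun _ => v) => //.
Qed.

Lemma ptws_cont (R : realType) (I : Type) (X : topologicalType) (h : X -> {ptws I -> R}) x :
  (forall i, {for x, continuous (fun y => h y i)}) -> {for x, continuous h}.
Proof. move=> H; apply: ptws_cvg => i; exact: H. Qed.

Lemma proj_cont (R : realType) (I : eqType) (i : I) :
  continuous (fun f : {ptws I -> R} => f i).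
Proof. exact: (@proj_continuous I (fun _ => R) i). Qed.

Lemma fst_cont {X Y : topologicalType} : continuous (@fst X Y).
Proof. by move=> p; exact: cvg_fst. Qed.
Lemma snd_cont {X Y : topologicalType} : continuous (@snd X Y).
Proof. by move=> p; exact: cvg_snd. Qed.

Lemma itv01 (R : realType) (t : R) : (`[0, 1]%classic : set R) t <-> 0 <= t <= 1.
Proof. by rewrite /= in_itv. Qed.

Lemma cmE {X Y : topologicalType} (A : set X) (B : set Y) f :
  cont_map A B f <-> cw A f /\ (forall x, A x -> B (f x)).
Proof. by rewrite /cont_map cwE. Qed.

Section Hom.
Variable R : realType.
Context {X Y Z : topologicalType}.


Lemma hrefl (A : set X) (B : set Y) f : cont_map A B f -> homotopic R A B f f.
Proof.
move=> /cmE [cf fAB]; exists (fun p : R * X => f p.2); split => //.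
apply/cmE; split; last by move=> p [_ /= Ap]; exact: fAB.
apply: (@cw_comp _ _ _ _ A _ f) => //; first exact: cw_glob snd_cont.
by move=> p [].
Qed.

Lemma heql (A : set X) (B : set Y) f g h :
  (forall x, A x -> f x = g x) -> homotopic R A B f h -> homotopic R A B g h.
Proof.
move=> fg [H [cH H0 H1]]; exists H; split => // x Ax; rewrite -fg //; exact: H0.
Qed.

Lemma heqr (A : set X) (B : set Y) f g h :
  (forall x, A x -> g x = h x) -> homotopic R A B f g -> homotopic R A B f h.
Proof.
move=> fg [H [cH H0 H1]]; exists H; split => // x Ax; rewrite -fg //; exact: H1.
Qed.

Lemma hpost (A : set X) (B : set Y) (C : set Z) f g k :
  homotopic R A B f g -> cont_map B C k -> homotopic R A C (k \o f) (k \o g).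
Proof.
move=> [H [cH H0 H1]] /cmE [ck kBC]; exists (k \o H); split.
- move: cH => /cmE [cH HB]; apply/cmE; split; last by move=> p /HB /kBC.
  exact: cw_comp cH HB ck.
- by move=> x Ax /=; rewrite H0.
- by move=> x Ax /=; rewrite H1.
Qed.

Lemma hpre (A : set X) (B : set Y) (C : set Z) f g k :
  homotopic R B C f g -> cont_map A B k -> homotopic R A C (f \o k) (g \o k).
Proof.
move=> [H [cH H0 H1]] /cmE [ck kAB].
exists (fun p : R * X => H (p.1, k p.2)); split.
- move: cH => /cmE [cH HB]; apply/cmE; split; last first.
    by move=> [t x] [/= t01 Ax]; apply: HB; split => //; exact: kAB.
  have c1 : cw ((`[0, 1]%classic : set R) `*` A) (fun p : R * X => (p.1, k p.2)).
    apply: cw_pair; first exact: cw_glob fst_cont.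
    apply: (@cw_comp _ _ _ _ A snd k) => //; first exact: cw_glob snd_cont.
    by move=> p [].
  have c2 : forall p, ((`[0, 1]%classic : set R) `*` A) p -> ((`[0, 1]%classic : set R) `*` B) (p.1, k p.2).
    by move=> [t x] [/= t01 Ax]; split => //; exact: kAB.
  exact: (@cw_comp _ _ _ _ ((`[0, 1]%classic : set R) `*` B) (fun p : R * X => (p.1, k p.2)) H c1 c2 cH).
- by move=> x Ax /=; rewrite H0 //; exact: kAB.
- by move=> x Ax /=; rewrite H1 //; exact: kAB.
Qed.

Lemma htrans (A : set X) (B : set Y) f g h :
  homotopic R A B f g -> homotopic R A B g h -> homotopic R A B f h.
Proof.
move=> [H1 [cH1 H10 H11]] [H2 [cH2 H20 H21]].
move: cH1 => /cmE [cH1 H1B]; move: cH2 => /cmE [cH2 H2B].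
pose phi1 := fun p : R * X => (2 * p.1, p.2).
pose phi2 := fun p : R * X => (2 * p.1 - 1, p.2).
have cphi1 : continuous phi1.
  move=> p; rewrite /phi1.
  have h1 : {for p, continuous (fun q : R * X => 2 * q.1)}.
    by apply: cM; [exact: cC | exact: fst_cont].
  exact: (cvg_pair h1 (@snd_cont R X p)).
have cphi2 : continuous phi2.
  move=> p; rewrite /phi2.
  have h1 : {for p, continuous (fun q : R * X => 2 * q.1 - 1)}.
    by apply: cB; [apply: cM; [exact: cC | exact: fst_cont]|exact: cC].
  exact: (cvg_pair h1 (@snd_cont R X p)).
exists (fun p : R * X => if p.1 <= 2^-1 then H1 (phi1 p) else H2 (phi2 p)).
split.
- apply/cmE; split; last first.
    move=> [t x] [/= /itv01 /andP [t0 t1] Ax] /=.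
    case: ifP => ht.
      by apply: H1B; split => //=; apply/itv01; apply/andP; split; lra.
    move/negbT: ht; rewrite -ltNge => ht.
    by apply: H2B; split => //=; apply/itv01; apply/andP; split; lra.
  pose C1 := [set p : R * X | p.1 <= 2^-1].
  pose C2 := [set p : R * X | 2^-1 <= p.1].
  have c1 : closed C1.
    have -> : C1 = fst @^-1` [set t : R | t <= 2^-1] by [].
    apply: preimage_closed; last exact: closed_le.
    move=> p _; exact: fst_cont.
  have c2 : closed C2.
    have -> : C2 = fst @^-1` [set t : R | 2^-1 <= t] by [].
    apply: preimage_closed; last exact: closed_ge.
    move=> p _; exact: fst_cont.
  apply: (@cw_paste _ _ _ C1 C2) => //.
    move=> [t x] _; rewrite /C1 /C2 /=.
    by have [hh|hh] := lerP t 2^-1; [left|right; apply: ltW].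
  + apply: (@cw_eq _ _ _ (H1 \o phi1)).
      by move=> [t x] [_ /= ->].
    apply: (@cw_comp _ _ _ _ ((`[0, 1]%classic : set R) `*` A)) => //.
      exact: cw_glob.
    move=> [t x] [[/= /itv01 /andP [t0 t1] Ax] ht]; rewrite /phi1 /phi2 /C1 /C2 /= in ht *.
    split => //=; apply/itv01; apply/andP; split; lra.
  + apply: (@cw_eq _ _ _ (H2 \o phi2)).
      move=> [t x] [[/= /itv01 /andP [t0 t1] Ax] ht]; rewrite /C2 /= in ht *.
      case: ifP => // ht2.
      have -> : t = 2^-1 by lra.
      rewrite /phi1 /phi2 /= mulfV ?subrr ?pnatr_eq0 // H11 // H20 //.
    apply: (@cw_comp _ _ _ _ ((`[0, 1]%classic : set R) `*` A)) => //.
      exact: cw_glob.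
    move=> [t x] [[/= /itv01 /andP [t0 t1] Ax] ht]; rewrite /phi1 /phi2 /C1 /C2 /= in ht *.
    split => //=; apply/itv01; apply/andP; split; lra.
- move=> x Ax /=; rewrite ifT; last lra.
  by rewrite /phi1 /= mulr0 H10.
- move=> x Ax /=; rewrite ifF; last by apply/negbTE; rewrite -ltNge; lra.
  rewrite /phi2 /= mulr1.
  have -> : (2:R) - 1 = 1 by lra.
  exact: H21.
Qed.
End Hom.

Section HE.
Variable R : realType.

Lemma cm_id {X : topologicalType} (A : set X) : cont_map A A id.
Proof. split => //; apply/cwE; apply: cw_glob => x; exact: cvg_id. Qed.

Lemma cm_comp {X Y Z : topologicalType} (A : set X) (B : set Y) (C : set Z) f g :
  cont_map A B f -> cont_map B C g -> cont_map A C (g \o f).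
Proof.
move=> /cmE [cf fAB] /cmE [cg gBC]; apply/cmE; split; last by move=> x /fAB /gBC.
exact: cw_comp cf fAB cg.
Qed.

Lemma he_trans {X Y Z : topologicalType} (A : set X) (B : set Y) (C : set Z) :
  homotopy_equivalent R A B -> homotopy_equivalent R B C -> homotopy_equivalent R A C.
Proof.
move=> [f1 [g1 [cf1 cg1 h1 k1]]] [f2 [g2 [cf2 cg2 h2 k2]]].
exists (f2 \o f1), (g1 \o g2); split.
- exact: cm_comp cf1 cf2.
- exact: cm_comp cg2 cg1.
- apply: htrans h1.
  have := hpre (hpost h2 cg1) cf1.
  by apply: heqr => x Ax.
- apply: htrans k2.
  have := hpre (hpost k1 cf2) cg2.
  by apply: heqr => x Ax.
Qed.
End HE.

Section Retract.
Variable R : realType.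
Variable V : finType.

Lemma cm_cst {X Y : topologicalType} (A : set X) (B : set Y) (b : Y) :
  B b -> cont_map A B (fun _ => b).
Proof. by move=> Bb; apply/cmE; split => //; apply: cw_glob; exact: cst_continuous. Qed.

Lemma he_points {X Y : topologicalType} (a : X) (b : Y) :
  homotopy_equivalent R [set a] [set b].
Proof.
exists (fun _ => b), (fun _ => a); split.
- exact: cm_cst.
- exact: cm_cst.
- apply: (@heql _ _ _ _ _ id); first by move=> x /= ->.
  exact: hrefl (cm_id _).
- apply: (@heql _ _ _ _ _ id); first by move=> x /= ->.
  exact: hrefl (cm_id _).
Qed.

Lemma retract_he (A B : set {ptws V -> R}) (r : {ptws V -> R} -> {ptws V -> R}) :
  (forall v, continuous (fun x => r x v)) ->
  (forall x, A x -> B (r x)) -> B `<=` A -> (forall x, B x -> r x = x) ->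
  (forall x t, A x -> 0 <= t <= 1 -> A (fun v => t * x v + (1 - t) * r x v)) ->
  homotopy_equivalent R A B.
Proof.
move=> Hr rAB BA rB seg.
have cr : continuous r by move=> x; apply: ptws_cont => v; exact: Hr.
exists r, id; split.
- by apply/cmE; split => //; exact: cw_glob.
- apply/cmE; split => //; apply: cw_glob => x; exact: cvg_id.
- exists (fun p : R * {ptws V -> R} =>
      ((fun v => p.1 * p.2 v + (1 - p.1) * r p.2 v) : {ptws V -> R})); split.
  + apply/cmE; split; last first.
      by move=> [t x] [/= /itv01 t01 Ax]; exact: seg.
    apply: cw_glob => p; apply: ptws_cont => v.
    apply: cD; apply: cM.
    * exact: fst_cont.
    * exact: (continuous_comp (@snd_cont _ _ p) (@proj_cont R V v p.2)).
    * by apply: cB; [exact: cC|exact: fst_cont].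
    * exact: (continuous_comp (@snd_cont _ _ p) (Hr v p.2)).
  + by move=> x Ax /=; apply: funext => v; rewrite mul0r add0r subr0 mul1r.
  + by move=> x Ax /=; apply: funext => v; rewrite mul1r subrr mul0r addr0.
- apply: (@heql _ _ _ _ _ id); first by move=> x Bx /=; rewrite rB.
  exact: hrefl (cm_id _).
Qed.
End Retract.

Section Comb.
Variable V : finType.
Variable e : rel V.
Hypothesis esym : symmetric e.
Hypothesis eirr : irreflexive e.

Definition DT (T M : {set V}) : {set V} -> bool := fun S =>
  (S \subset T) && ([exists m, [&& m \in M, m \in T & m \notin S]] ||
     [exists u, exists v, [&& e u v, u \in T, v \in T, u \notin S & v \notin S]]).

Lemma DT_down (T M S1 S2 : {set V}) : S1 \subset S2 -> DT T M S2 -> DT T M S1.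
Proof.
rewrite /DT => s12 /andP [s2T H]; apply/andP; split; first exact: fintype.subset_trans s12 s2T.
case/orP: H => [/existsP [m /and3P [mM mT mS]]|/existsP [u /existsP [v /and5P [uv uT vT uS vS]]]].
  apply/orP; left; apply/existsP; exists m; rewrite mM mT /=.
  by apply: contra mS; apply: (fintype.subsetP s12).
apply/orP; right; apply/existsP; exists u; apply/existsP; exists v.
rewrite uv uT vT /=; apply/andP; split.
  by apply: contra uS; apply: (fintype.subsetP s12).
by apply: contra vS; apply: (fintype.subsetP s12).
Qed.

Lemma DT_add (T M : {set V}) p (S : {set V}) : p \in T -> p \notin M ->
  (forall q, q \in T -> e p q -> q \notin S -> q \in M) -> DT T M S -> DT T M (p |: S).
Proof.
rewrite /DT => pT pM Hq /andP [ST H]; apply/andP; split.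
  by apply/fintype.subsetP => v; rewrite in_setU1 => /orP [/eqP ->|/(fintype.subsetP ST)].
case/orP: H => [/existsP [m /and3P [mM mT mS]]|/existsP [u /existsP [v /and5P [uv uT vT uS vS]]]].
  apply/orP; left; apply/existsP; exists m; rewrite mM mT /= in_setU1 negb_or mS andbT.
  by apply: contraNneq pM => <-.
have [up|up] := eqVneq u p.
  subst u; apply/orP; left; apply/existsP; exists v.
  have vM := Hq v vT uv vS.
  rewrite vM vT /= in_setU1 negb_or vS andbT.
  by apply: contraNneq pM => <-.
have [vp|vp] := eqVneq v p.
  subst v; apply/orP; left; apply/existsP; exists u.
  have uM : u \in M by apply: Hq => //; rewrite esym.
  rewrite uM uT /= in_setU1 negb_or uS andbT.
  by apply: contraNneq pM => <-.
apply/orP; right; apply/existsP; exists u; apply/existsP; exists v.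
by rewrite uv uT vT !in_setU1 !negb_or up vp uS vS.
Qed.

Lemma DT_restr (T M : {set V}) z (S : {set V}) : z \in T -> z \notin M -> S \subset T :\ z ->
  DT (T :\ z) (M :|: [set q | e z q]) S = DT T M S.
Proof.
move=> zT zM ST'.
have ST : S \subset T by apply: fintype.subset_trans ST' (subsetDl _ _).
have zS : z \notin S.
  by apply/negP => /(fintype.subsetP ST'); rewrite !inE eqxx.
rewrite /DT ST ST' /=; apply/idP/idP.
  case/orP => [/existsP [m /and3P [mM mT mS]]|/existsP [u /existsP [v /and5P [uv uT vT uS vS]]]].
    move: mT; rewrite !inE => /andP [mz mT].
    move: mM; rewrite !inE => /orP [mM|zm].
      by apply/orP; left; apply/existsP; exists m; rewrite mM mT mS.
    apply/orP; right; apply/existsP; exists z; apply/existsP; exists m.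
    by rewrite zm mT zS mS zT.
  move: uT vT; rewrite !inE => /andP [_ uT] /andP [_ vT].
  by apply/orP; right; apply/existsP; exists u; apply/existsP; exists v; rewrite uv uT vT uS vS.
case/orP => [/existsP [m /and3P [mM mT mS]]|/existsP [u /existsP [v /and5P [uv uT vT uS vS]]]].
  have mz : m != z by apply: contraNneq zM => <-.
  by apply/orP; left; apply/existsP; exists m; rewrite !inE mM mz mT mS.
have [uz|uz] := eqVneq u z.
  subst u; have vz : v != z by apply: contraTneq uv => ->; rewrite eirr.
  by apply/orP; left; apply/existsP; exists v; rewrite !inE uv vz vT vS orbT.
have [vz|vz] := eqVneq v z.
  subst v; apply/orP; left; apply/existsP; exists u.
  by rewrite !inE esym uv uz uT uS orbT.
by apply/orP; right; apply/existsP; exists u; apply/existsP; exists v; rewrite !inE uv uz vz uT vT uS vS.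
Qed.

Lemma DT_all (T M S : {set V}) : T \subset M ->
  DT T M S = (S \subset T) && [exists t, (t \in T) && (t \notin S)].
Proof.
move=> TM; rewrite /DT; case: (S \subset T) => //=; apply/idP/idP.
  case/orP => [/existsP [m /and3P [mM mT mS]]|/existsP [u /existsP [v /and5P [uv uT vT uS vS]]]].
    by apply/existsP; exists m; rewrite mT mS.
  by apply/existsP; exists u; rewrite uT uS.
move=> /existsP [t /andP [tT tS]]; apply/orP; left; apply/existsP; exists t.
by rewrite tT tS (fintype.subsetP TM).
Qed.
End Comb.

Section Geo.
Variable R : realType.
Variable V : finType.
Implicit Types x w : {ptws V -> R}.

Definition dclosed (D : {set V} -> bool) :=
  forall S1 S2 : {set V}, S1 \subset S2 -> D S2 -> D S1.

Definition supp x : {set V} := finset (fun v => x v != 0).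

Lemma suppP x v : (v \in supp x) = (x v != 0).
Proof. by rewrite /supp inE. Qed.

Lemma supp_sub x (S : {set V}) : (forall v, x v != 0 -> v \in S) -> supp x \subset S.
Proof. by move=> H; apply/fintype.subsetP => v; rewrite suppP => /H. Qed.

Lemma sum_ind (a : V) (c : R) : \sum_v (if v == a then c else 0) = c.
Proof. by rewrite (bigD1 a) //= eqxx big1 ?addr0 // => i /negbTE ->. Qed.

Lemma seg_nonneg x w t : (forall v, 0 <= x v) -> (forall v, 0 <= w v) -> 0 <= t <= 1 ->
  forall v, 0 <= t * x v + (1 - t) * w v.
Proof.
move=> hx hw /andP [t0 t1] v; apply: addr_ge0; apply: mulr_ge0 => //.
by rewrite subr_ge0.
Qed.

Lemma seg_sum x w t : \sum_v x v = 1 -> \sum_v w v = 1 ->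
  \sum_v (t * x v + (1 - t) * w v) = 1.
Proof.
by move=> sx sw; rewrite big_split /= -!mulr_sumr sx sw !mulr1 addrC subrK.
Qed.

Lemma seg_supp x w t v : t * x v + (1 - t) * w v != 0 -> (x v != 0) || (w v != 0).
Proof.
apply: contraNT; rewrite negb_or !negbK => /andP [/eqP -> /eqP ->].
by rewrite !mulr0 addr0.
Qed.

Definition delta (p : V) : {ptws V -> R} := fun v => if v == p then 1 else 0.

Lemma cone_contr (D : {set V} -> bool) (p : V) : dclosed D -> D (@finset.set0 V) ->
  (forall S, D S -> D (p |: S)) -> contractible R (geom_realization R D).
Proof.
move=> dD D0 Dp.
have dA : geom_realization R D (delta p).
  split.
  - by move=> v; rewrite /delta; case: ifP.
  - exact: sum_ind.
  - apply: (dD _ (p |: (@finset.set0 V))); last exact: Dp.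
    apply: supp_sub => v; rewrite /delta; case: ifP => [/eqP ->|]; first by rewrite setU11.
    by rewrite eqxx.
apply: (@he_trans _ _ _ _ _ [set delta p]); last exact: he_points.
apply: (@retract_he _ _ _ _ (fun _ => delta p)).
- by move=> v; exact: cst_continuous.
- by [].
- by move=> y ->.
- by move=> y ->.
- move=> x t [x0 x1 xD] t01; split.
  + by apply: seg_nonneg => // v; rewrite /delta; case: ifP.
  + by apply: seg_sum => //; exact: sum_ind.
  + apply: (dD _ (p |: supp x)); last exact: Dp.
    apply: supp_sub => v /seg_supp /orP [xv|].
      by rewrite setU1r // suppP.
    by rewrite /delta; case: ifP => [/eqP ->|]; [rewrite setU11|rewrite eqxx].
Qed.
End Geo.

Section Move.
Variable R : realType.
Variable V : finType.
Variable e : rel V.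
Hypothesis esym : symmetric e.
Hypothesis eirr : irreflexive e.

Lemma DT_dclosed (T M : {set V}) : dclosed (DT e T M).
Proof. by move=> S1 S2; exact: DT_down. Qed.

Lemma DT_subT (T M S : {set V}) : DT e T M S -> S \subset T.
Proof. by case/andP. Qed.

Lemma move_he (T M : {set V}) (z l : V) :
  z \in T -> l \in T -> z != l -> z \notin M -> l \notin M ->
  (forall q, q \in T -> e l q -> q != z -> q \in M) ->
  homotopy_equivalent R (geom_realization R (DT e T M))
     (geom_realization R (DT e (T :\ z) (M :|: [set q | e z q]))).
Proof.
move=> zT lT zl zM lM Hl.
pose r := fun x : {ptws V -> R} =>
  ((fun v => if v == z then 0 else if v == l then x l + x z else x v) : {ptws V -> R}).
have rE : forall x v, r x v = x v + (if v == l then x z else 0) - (if v == z then x z else 0).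
  move=> x v; rewrite /r; have [->|vz] := eqVneq v z.
    by rewrite (negbTE zl) addr0 subrr.
  by case: eqVneq => [->|vl]; rewrite ?addr0 subr0.
have rsum : forall x, \sum_v r x v = \sum_v x v.
  move=> x; under eq_bigr do rewrite rE.
  by rewrite big_split /= big_split /= sumrN !sum_ind addrK.
pose S1 := fun x : {ptws V -> R} => if z \in supp x then l |: supp x else supp x.
have DS1 : forall x, DT e T M (supp x) -> DT e T M (S1 x).
  move=> x Dx; rewrite /S1; case: ifP => // zS.
  apply: DT_add => // q qT lq qS; apply: Hl => //.
  by apply: contraNneq qS => ->.
have S1T : forall x, DT e T M (supp x) -> S1 x \subset T.
  move=> x Dx; rewrite /S1; case: ifP => _; last exact: DT_subT Dx.
  by apply/fintype.subsetP => v; rewrite in_setU1 => /orP [/eqP ->|/(fintype.subsetP (DT_subT Dx))].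
have suppr : forall x, supp (r x) \subset S1 x :\ z.
  move=> x; apply: supp_sub => v; rewrite /r.
  have [->|vz] := eqVneq v z; first by rewrite eqxx.
  rewrite in_setD1 vz /= /S1.
  have [->|vl] := eqVneq v l.
    case: ifP => zS; first by rewrite setU11.
    by move: zS; rewrite suppP => /negbFE /eqP ->; rewrite addr0 suppP.
  move=> xv; case: ifP => _; last by rewrite suppP.
  by rewrite setU1r // suppP.
apply: (@retract_he _ _ _ _ r).
- move=> v; rewrite /r; case: (v == z); first exact: cst_continuous.
  case: (v == l); last exact: proj_cont.
  by move=> x; apply: cD; exact: proj_cont.
- move=> x [x0 x1 xD]; split.
  + move=> v; rewrite /r; case: ifP => // _; case: ifP => // _.
    exact: addr_ge0.
  + by rewrite rsum.
  + apply: (DT_down (suppr x)).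
    rewrite DT_restr //; last first.
      apply/fintype.subsetP => v; rewrite !in_setD1 => /andP [-> /=].
      exact: (fintype.subsetP (S1T _ xD)).
    apply: (DT_down _ (DS1 _ xD)); exact: subsetDl.
- move=> x [x0 x1 xD]; split => //.
  have sT := DT_subT xD.
  by rewrite -(@DT_restr _ _ esym eirr T M z).
- move=> x [x0 x1 xD]; apply: funext => v.
  have xz : x z = 0.
    apply/eqP; apply: contraTT (DT_subT xD) => xz.
    apply/negP => /fintype.subsetP /(_ z); rewrite suppP xz !inE eqxx /=.
    by move/(_ isT).
  by rewrite rE xz; case: ifP; case: ifP; rewrite ?addr0 ?subr0.
- move=> x t [x0 x1 xD] t01; split.
  + apply: seg_nonneg => // v; rewrite /r; case: ifP => // _; case: ifP => // _.
    exact: addr_ge0.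
  + by apply: seg_sum => //; rewrite rsum.
  + apply: (DT_down _ (DS1 _ xD)); apply: supp_sub => v /seg_supp /orP [xv|rv].
      rewrite /S1; case: ifP => _; last by rewrite suppP.
      by rewrite setU1r // suppP.
    have : v \in supp (r x) by rewrite suppP.
    move/(fintype.subsetP (suppr x)); rewrite in_setD1; by case/andP.
Qed.
End Move.

Section Forest.
Variable V : finType.
Variable e : rel V.
Hypothesis esym : symmetric e.
Hypothesis eirr : irreflexive e.
Hypothesis nc : ~ has_cycle e.
Local Open Scope nat_scope.

Lemma cycle_from (x : V) (t : seq V) (c : V) :
  uniq (x :: t) -> path e x t -> c \in x :: t -> c != last x t -> e (last x t) c ->
  index c (x :: t) + 2 != size (x :: t) -> False.
Proof.
set s := x :: t => us ps cs cy yc ic.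
set i := index c s.
have iS : i < size s by rewrite index_mem.
have nthc : nth x s i = c by rewrite nth_index.
have ilast : i != (size s).-1.
  apply: contra cy => /eqP ie.
  by rewrite -nthc ie nth_last.
have dE : drop i s = c :: drop i.+1 s by rewrite (drop_nth x iS) nthc.
apply: nc; exists (drop i s); split.
- rewrite size_drop; move: ilast ic iS; rewrite -/i => h1 h2 h3; lia.
- exact: drop_uniq.
- rewrite dE /= rcons_path; apply/andP; split.
    have := @path.drop_sorted _ e i s ps; by rewrite dE.
  have -> : last c (drop i.+1 s) = last x t.
    have E : last x s = last (last x (take i s)) (drop i s) by rewrite -last_cat cat_take_drop.
    by rewrite -[RHS]/(last x s) E dE.
  exact: yc.
Qed.

Lemma long_path (U : {set V}) :
  (forall p, p \in U -> exists q, q \in U /\ e p q) ->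
  (forall l z, l \in U -> z \in U -> e l z -> exists q, [/\ q \in U, e l q & q != z]) ->
  forall k x0, x0 \in U -> exists x t, [/\ size t = k, uniq (x :: t), all (mem U) (x :: t) & path e x t].
Proof.
move=> H1 H2; elim => [|k IH] x0 x0U.
  by exists x0, [::]; rewrite /= x0U.
have [x [t [st ut alU pt]]] := IH x0 x0U.
set y := last x t.
have yU : y \in U by move/allP: alU; apply; rewrite /y mem_last.
have ext : forall a, a \in U -> e y a -> a \notin x :: t ->
    exists x t, [/\ size t = k.+1, uniq (x :: t), all (mem U) (x :: t) & path e x t].
  move=> a aU ya an; exists x, (rcons t a); split.
  - by rewrite size_rcons st.
  - by rewrite -rcons_cons rcons_uniq an ut.
  - by rewrite -rcons_cons all_rcons alU andbT; exact: aU.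
  - by rewrite rcons_path pt ya.
have [a [aU ya]] := H1 y yU.
have [an|ain] := boolP (a \notin x :: t); first exact: (ext a aU ya an).
have [b [bU yb ba]] := H2 y a yU aU ya.
have [bn|bin] := boolP (b \notin x :: t); first exact: (ext b bU yb bn).
move: ain bin; rewrite !negbK => ain bin.
have ay : a != y by apply: contraTneq ya => ->; rewrite eirr.
have by' : b != y by apply: contraTneq yb => ->; rewrite eirr.
have [ia|ia] := eqVneq (index a (x :: t) + 2) (size (x :: t)).
  have [ib|ib] := eqVneq (index b (x :: t) + 2) (size (x :: t)).
    exfalso; move/eqP: ba; apply.
    rewrite -(nth_index x ain) -(nth_index x bin).
    by congr nth; apply/eqP; rewrite -(eqn_add2r 2) ia ib.
  by exfalso; exact: (@cycle_from x t b ut pt bin by' yb ib).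
by exfalso; exact: (@cycle_from x t a ut pt ain ay ya ia).
Qed.

Lemma forest_leaf (U : {set V}) u0 : u0 \in U ->
  (forall p, p \in U -> exists q, q \in U /\ e p q) ->
  exists l z, [/\ l \in U, z \in U, e l z & forall q, q \in U -> e l q -> q = z].
Proof.
move=> u0U H1; apply: contrapT => Hn.
have H2 : forall l z, l \in U -> z \in U -> e l z -> exists q, [/\ q \in U, e l q & q != z].
  move=> l z lU zU lz; apply: contrapT => Hq; apply: Hn; exists l, z; split => // q qU lq.
  apply: contrapT => qz; apply: Hq; exists q; split => //; exact/eqP.
have [x [t [st ut _ _]]] := long_path H1 H2 #|V| u0U.
move/card_uniqP: ut => ut.
have := max_card (mem (x :: t)); rewrite ut /= st.
by rewrite ltnn.
Qed.
End Forest.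

Section FMax.
Variable R : realType.

Definition fmax (I : Type) (F : I -> R) (a : R) (l : seq I) :=
  foldr (fun j m => Num.max (F j) m) a l.

Lemma fmax_ge (I : eqType) (F : I -> R) a l j : j \in l -> F j <= fmax F a l.
Proof.
elim: l => [|b l IH] //=; rewrite inE => /orP [/eqP ->|jl].
  by rewrite le_max lexx.
by rewrite le_max IH // orbT.
Qed.

Lemma fmax_le (I : Type) (F : I -> R) a l c : a <= c -> (forall j, F j <= c) -> fmax F a l <= c.
Proof. by move=> ac Fc; elim: l => [|b l IH] //=; rewrite ge_max Fc IH. Qed.

Lemma fmax_attain (I : Type) (F : I -> R) a l : fmax F a l = a \/ exists j, fmax F a l = F j.
Proof.
elim: l => [|b l IH] /=; first by left.
rewrite maxEle; case: ifP => _; last by right; exists b.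
by case: IH => [->|[j ->]]; [left|right; exists j].
Qed.

Lemma fmax_cont (T : topologicalType) (I : Type) (F : I -> T -> R) (a : T -> R) l x :
  {for x, continuous a} -> (forall j, {for x, continuous (F j)}) ->
  {for x, continuous (fun y => fmax (F^~ y) (a y) l)}.
Proof.
move=> ca cF; elim: l => [|b l IH] //=.
exact: cMax.
Qed.
End FMax.

Section Sphere.
Variable R : realType.
Variable V : finType.

Definition sset (T : {set V}) : set {ptws V -> R} :=
  [set x | [/\ (forall v, 0 <= x v), \sum_v x v = 1,
      (forall v, v \notin T -> x v = 0) & exists t, t \in T /\ x t = 0]].

Lemma sum_T (T : {set V}) k t0 (x : V -> R) : #|T| = k.+1 ->
  (forall v, v \notin T -> x v = 0) ->
  \sum_v x v = \sum_(j < k.+1) x (nth t0 (enum T) j).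
Proof.
move=> cT xT.
rewrite (bigID (mem T)) /= [X in _ + X]big1 ?addr0; last by move=> v /xT.
rewrite -big_enum (big_nth t0) big_mkord.
have -> : size (enum T) = k.+1 by rewrite -cardE.
by [].
Qed.

Section SM.
Variable T : {set V}.
Variable k : nat.
Hypothesis cT : #|T| = k.+1.
Variable t0 : V.

Definition tj (j : 'I_k.+1) := nth t0 (enum T) j.
Definition pos (v : V) : 'I_k.+1 := inord (index v (enum T)).
Definition nn : R := k.+1%:R.
Definition uu (u : {ptws 'I_k -> R}) (j : 'I_k.+1) : R := oapp u 0 (unlift ord_max j).
Definition su (u : {ptws 'I_k -> R}) := \sum_(i < k) u i.
Definition dd u j := uu u j - su u / nn.
Definition DD u := fmax (fun j => - dd u j) (- dd u ord_max) (enum 'I_k.+1).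
Definition gg u : {ptws V -> R} :=
  fun v => if v \in T then nn^-1 + dd u (pos v) / (nn * DD u) else 0.
Definition YY (x : {ptws V -> R}) j := x (tj j) - x (tj ord_max).
Definition NN x := Num.sqrt (\sum_(i < k) YY x (lift ord_max i) * YY x (lift ord_max i)).
Definition ff x : {ptws 'I_k -> R} := fun i => YY x (lift ord_max i) / NN x.

Lemma size_eT : size (enum T) = k.+1.
Proof. by rewrite -cardE cT. Qed.

Lemma tjT j : tj j \in T.
Proof. by rewrite -mem_enum /tj mem_nth // size_eT. Qed.

Lemma pos_tj j : pos (tj j) = j.
Proof.
apply: val_inj; rewrite /pos /tj /= index_uniq ?enum_uniq ?size_eT //.
by rewrite inord_val.
Qed.

Lemma tj_pos v : v \in T -> tj (pos v) = v.
Proof.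
move=> vT; rewrite /tj /pos inordK ?nth_index ?mem_enum //.
by rewrite -size_eT index_mem mem_enum.
Qed.

Lemma uu_lift u i : uu u (lift ord_max i) = u i.
Proof. by rewrite /uu liftK. Qed.

Lemma uu_max u : uu u ord_max = 0.
Proof. by rewrite /uu unlift_none. Qed.

Lemma sum_lift (F : 'I_k.+1 -> R) :
  \sum_j F j = \sum_(i < k) F (lift ord_max i) + F ord_max.
Proof.
rewrite big_ord_recr /=; congr (_ + _); apply: eq_bigr => i _.
by congr F; apply: val_inj; rewrite [RHS]lift_max.
Qed.

Lemma nn_gt0 : 0 < nn.
Proof. by rewrite /nn ltr0n. Qed.

Lemma nn_neq0 : nn != 0.
Proof. by rewrite gt_eqF // nn_gt0. Qed.

Lemma nk0 : (1 + k%:R != 0 :> R).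
Proof. by rewrite -mulrS pnatr_eq0. Qed.

Lemma sum_dd u : \sum_j dd u j = 0.
Proof.
rewrite /dd sumrB sum_lift.
under eq_bigr do rewrite uu_lift.
rewrite uu_max addr0 sumr_const card_ord -mulr_natr -/(su u) -/nn.
by rewrite divfK ?subrr // nn_neq0.
Qed.

Lemma DD_ge u j : - dd u j <= DD u.
Proof. exact: (@fmax_ge R _ (fun j => - dd u j) (- dd u ord_max) (enum 'I_k.+1) j (mem_enum _ _)). Qed.

Lemma DD_attain u : exists j, DD u = - dd u j.
Proof.
case: (fmax_attain (fun j => - dd u j) (- dd u ord_max) (enum 'I_k.+1)) => [E|[j E]].
  by exists ord_max.
by exists j.
Qed.

Lemma sum_sq_u u : sphere R k u -> \sum_(i < k) u i * u i = 1.
Proof. by rewrite /sphere /= => <-; apply: eq_bigr => i _; rewrite expr2. Qed.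

Lemma dd_nz u : sphere R k u -> exists j, dd u j != 0.
Proof.
move=> /sum_sq_u su1; apply: contrapT => H.
have d0 : forall j, dd u j = 0.
  by move=> j; apply/eqP; apply: contrapT => /negP h; apply: H; exists j.
have u0 : forall i, u i = 0.
  move=> i; have := d0 (lift ord_max i); have := d0 ord_max.
  rewrite /dd uu_lift uu_max => h1 h2.
  move/eqP: h1; rewrite sub0r oppr_eq0 => /eqP h1.
  by move: h2; rewrite h1 subr0.
move: su1; rewrite big1 => [/eqP|i _]; first by rewrite eq_sym oner_eq0.
by rewrite u0 mul0r.
Qed.

Lemma DD_gt0 u : sphere R k u -> 0 < DD u.
Proof.
move=> su1; rewrite ltNge; apply/negP => Dle.
have dge : forall j, 0 <= dd u j.
  by move=> j; rewrite -oppr_le0; exact: le_trans (DD_ge u j) Dle.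
have /psumr_eq0P H := sum_dd u.
by case: (dd_nz su1) => j; rewrite H ?eqxx //.
Qed.

Lemma gg_tj u j : gg u (tj j) = nn^-1 + dd u j / (nn * DD u).
Proof. by rewrite /gg tjT pos_tj. Qed.

Lemma hlp1 (a b N : R) : 0 <= a -> 0 < N -> - ((a - b) / N) <= b / N.
Proof.
move=> a0 N0; rewrite -mulNr opprB; apply: ler_wpM2r; first by rewrite invr_ge0 ltW.
by rewrite lerBlDr lerDl.
Qed.

Lemma gg_in u : sphere R k u -> sset T (gg u).
Proof.
move=> su1; have Dp := DD_gt0 su1.
have D0 : DD u != 0 by rewrite gt_eqF.
have n0 := nn_neq0.
have cpos : 0 < nn * DD u by rewrite mulr_gt0 // nn_gt0.
have E : forall j, nn^-1 + dd u j / (nn * DD u) = (DD u + dd u j) / (nn * DD u).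
  by move=> j; field; rewrite ?nk0 ?D0 ?andbT //.
split.
- move=> v; rewrite /gg; case: ifP => // vT; rewrite E; apply: divr_ge0; last exact: ltW.
  by rewrite -[dd u _]opprK subr_ge0; exact: DD_ge.
- rewrite (@sum_T T k t0 (gg u) cT); last by move=> v vT; rewrite /gg (negbTE vT).
  under eq_bigr do rewrite gg_tj.
  rewrite big_split /= sumr_const card_ord -mulr_suml sum_dd mul0r addr0.
  by rewrite -mulr_natr mulVf.
- by move=> v vT; rewrite /gg (negbTE vT).
- case: (DD_attain u) => j Dj; exists (tj j); split; first exact: tjT.
  rewrite gg_tj Dj.
  have dj : dd u j != 0 by apply: contraTneq Dp => dj; rewrite Dj dj oppr0 ltxx.
  by field; rewrite ?nk0 ?D0 ?dj ?andbT //.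
Qed.

Lemma YY_max x : YY x ord_max = 0.
Proof. by rewrite /YY subrr. Qed.

Lemma sum_tj x : sset T x -> \sum_(j < k.+1) x (tj j) = 1.
Proof. by case=> x0 x1 xT _; rewrite -x1 (@sum_T T k t0 x cT). Qed.

Lemma NN_gt0 x : sset T x -> 0 < NN x.
Proof.
move=> xs; move: (xs) => [x0 x1 xT [t [tT xt]]].
rewrite /NN sqrtr_gt0 lt_def; apply/andP; split; last first.
  by apply: sumr_ge0 => i _; rewrite -expr2 sqr_ge0.
apply/negP => /eqP /psumr_eq0P H.
have Y0 : forall i, YY x (lift ord_max i) = 0.
  have Hnn : forall i : 'I_k, true -> 0 <= YY x (lift ord_max i) * YY x (lift ord_max i).
    by move=> i _; rewrite -expr2 sqr_ge0.
  by move=> i; have /eqP := H Hnn i isT; rewrite mulf_eq0 orbb => /eqP.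
have Xe : forall j, x (tj j) = x (tj ord_max).
  move=> j; case: (unliftP ord_max j) => [i ->|->] //.
  by apply/eqP; rewrite -subr_eq0; apply/eqP; exact: Y0.
have Xm : x (tj ord_max) = 0 by rewrite -(Xe (pos t)) tj_pos.
have := sum_tj xs; rewrite big1 => [/eqP|j _]; first by rewrite eq_sym oner_eq0.
by rewrite Xe Xm.
Qed.

Lemma ff_in x : sset T x -> sphere R k (ff x).
Proof.
move=> xs; have Np := NN_gt0 xs.
have N0 : NN x != 0 by rewrite gt_eqF.
rewrite /sphere /=.
have -> : \sum_(i < k) ff x i ^+ 2 =
    (\sum_(i < k) YY x (lift ord_max i) * YY x (lift ord_max i)) / (NN x ^+ 2).
  rewrite mulr_suml; apply: eq_bigr => i _; rewrite /ff; field; rewrite ?N0 ?andbT //.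
rewrite /NN sqr_sqrtr ?divff //; last by apply: sumr_ge0 => i _; rewrite -expr2 sqr_ge0.
by apply: contra N0 => /eqP S0; rewrite /NN S0 sqrtr0.
Qed.

Lemma fg u : sphere R k u -> ff (gg u) = u.
Proof.
move=> su1; have Dp := DD_gt0 su1.
have D0 : DD u != 0 by rewrite gt_eqF.
have n0 := nn_neq0.
have cpos : 0 < nn * DD u by rewrite mulr_gt0 // nn_gt0.
have hY : forall i, YY (gg u) (lift ord_max i) = u i / (nn * DD u).
  by move=> i; rewrite /YY !gg_tj /dd uu_lift uu_max; field; rewrite ?nk0 ?D0 ?andbT //.
have hN : NN (gg u) = (nn * DD u)^-1.
  rewrite /NN; under eq_bigr do rewrite hY.
  have -> : \sum_(i < k) (u i / (nn * DD u)) * (u i / (nn * DD u)) = ((nn * DD u)^-1) ^+ 2.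
    rewrite -[RHS]mul1r -(sum_sq_u su1) mulr_suml; apply: eq_bigr => i _; field; rewrite ?nk0 ?D0 ?andbT //.
  by rewrite sqrtr_sqr ger0_norm // invr_ge0 ltW.
apply: funext => i; rewrite /ff hY hN; field; rewrite ?nk0 ?D0 ?andbT //.
Qed.

Lemma gf x : sset T x -> gg (ff x) = x.
Proof.
move=> xs; move: (xs) => [x0 x1 xT [t [tT xt]]].
have Np := NN_gt0 xs; have N0 : NN x != 0 by rewrite gt_eqF.
have n0 := nn_neq0.
have huu : forall j, uu (ff x) j = YY x j / NN x.
  move=> j; case: (unliftP ord_max j) => [i ->|->].
    by rewrite uu_lift.
  by rewrite uu_max YY_max mul0r.
have hsu : su (ff x) = (1 - nn * x (tj ord_max)) / NN x.
  rewrite /su; have -> : \sum_(i < k) ff x i = \sum_(i < k) uu (ff x) (lift ord_max i).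
    by apply: eq_bigr => i _; rewrite uu_lift.
  under eq_bigr do rewrite huu.
  rewrite -mulr_suml; congr (_ * _).
  have := sum_lift (YY x); rewrite YY_max addr0 => <-.
  rewrite /YY sumrB (sum_tj xs) sumr_const card_ord -mulr_natr mulrC.
  by [].
have hdd : forall j, dd (ff x) j = (x (tj j) - nn^-1) / NN x.
  by move=> j; rewrite /dd huu hsu /YY; field; rewrite ?nk0 ?N0 ?andbT //.
have hDD : DD (ff x) = nn^-1 / NN x.
  apply/eqP; rewrite eq_le; apply/andP; split.
    rewrite /DD; apply: fmax_le => [|j]; rewrite hdd; apply: hlp1 => //.
  have := DD_ge (ff x) (pos t); rewrite hdd tj_pos // xt sub0r mulNr opprK.
  by [].
apply: funext => v; rewrite /gg; case: ifP => vT; last by rewrite xT // vT.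
rewrite -{2}(tj_pos vT) hdd hDD; field; rewrite ?nk0 ?N0 ?andbT //.
Qed.

Lemma uu_cont j u : {for u, continuous (fun y => uu y j)}.
Proof.
rewrite /uu; case: (unlift ord_max j) => [i|] /=; last exact: cC.
exact: proj_cont.
Qed.

Lemma su_cont u : {for u, continuous su}.
Proof. rewrite /su; apply: cSum => i; exact: proj_cont. Qed.

Lemma dd_cont j u : {for u, continuous (fun y => dd y j)}.
Proof.
rewrite /dd; apply: cB; first exact: uu_cont.
by apply: cM; [exact: su_cont|exact: cC].
Qed.

Lemma DD_cont u : {for u, continuous DD}.
Proof.
have := (@fmax_cont R _ _ (fun j y => - dd y j) (fun y => - dd y ord_max) (enum 'I_k.+1) u
   (cN (dd_cont (j:=ord_max) (u:=u))) (fun j => cN (dd_cont (j:=j) (u:=u)))).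
by [].
Qed.

Lemma ff_cont x : sset T x -> {for x, continuous ff}.
Proof.
move=> xs; have N0 : NN x != 0 by rewrite gt_eqF // NN_gt0.
apply: ptws_cont => i; rewrite /ff.
apply: cM.
  by rewrite /YY; apply: cB; exact: proj_cont.
apply: cV => //; rewrite /NN; apply: cSqrt; apply: cSum => i'.
by rewrite /YY; apply: cM; apply: cB; exact: proj_cont.
Qed.

Lemma gg_cont u : sphere R k u -> {for u, continuous gg}.
Proof.
move=> su1; have Dp := DD_gt0 su1.
have c0 : nn * DD u != 0 by rewrite gt_eqF // mulr_gt0 // nn_gt0.
apply: ptws_cont => v; rewrite /gg; case: (v \in T); last exact: cC.
apply: cD; first exact: cC.
apply: cM; first exact: dd_cont.
apply: cV => //; apply: cM; first exact: cC.
exact: DD_cont.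
Qed.

Lemma sphere_he_sm : homotopy_equivalent R (sset T) (sphere R k).
Proof.
exists ff, gg; split.
- apply/cmE; split; last exact: ff_in.
  by apply: cw_pt => x xs; exact: ff_cont.
- apply/cmE; split; last exact: gg_in.
  by apply: cw_pt => u su1; exact: gg_cont.
- apply: (@heql _ _ _ _ _ id); first by move=> x xs /=; rewrite gf.
  exact: hrefl (cm_id _).
- apply: (@heql _ _ _ _ _ id); first by move=> x xs /=; rewrite fg.
  exact: hrefl (cm_id _).
Qed.
End SM.

Lemma sphere_he (T : {set V}) k : #|T| = k.+1 ->
  homotopy_equivalent R (sset T) (sphere R k).
Proof.
move=> cT; have : (0 < #|T|)%N by rewrite cT.
case/card_gt0P => t0 _; exact: (sphere_he_sm cT t0).
Qed.
End Sphere.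

Section Main.
Variable R : realType.
Variable V : finType.
Variable e : rel V.
Hypothesis esym : symmetric e.
Hypothesis eirr : irreflexive e.
Hypothesis nc : ~ has_cycle e.

Lemma geo_sset (T M : {set V}) : T \subset M ->
  geom_realization R (DT e T M) = @sset R V T.
Proof.
move=> TM; rewrite eqEsubset; split => x.
  move=> [x0 x1 xD]; split => //.
  - move=> v vT; apply/eqP; apply: contraNT vT => xv.
    by move: xD; rewrite /DT => /andP [/fintype.subsetP /(_ v) + _]; apply; rewrite suppP.
  - move: xD; rewrite (@DT_all V e T M _ TM) => /andP [_ /existsP [t /andP [tT tS]]].
    by exists t; split => //; apply/eqP; move: tS; rewrite suppP negbK.
move=> [x0 x1 xT [t [tT xt]]]; split => //.
rewrite (@DT_all V e T M _ TM); apply/andP; split.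
  apply: supp_sub => v; apply: contraNT => vT; apply/eqP; exact: xT.
by apply/existsP; exists t; rewrite tT suppP xt eqxx.
Qed.

Lemma main_ind n : forall T M : {set V}, (#|T| <= n)%N -> DT e T M (@finset.set0 V) ->
  contractible R (geom_realization R (DT e T M)) \/
  exists k, homotopy_equivalent R (geom_realization R (DT e T M)) (sphere R k).
Proof.
elim: n => [|n IH] T M cT D0.
  exfalso; move: D0; rewrite /DT => /andP [_ /orP [/existsP [m /and3P [_ mT _]]|/existsP [u /existsP [v /and5P [_ uT _ _ _]]]]].
    by move: cT; rewrite leqn0 => /eqP/cards0_eq TE; move: mT; rewrite TE inE.
  by move: cT; rewrite leqn0 => /eqP/cards0_eq TE; move: uT; rewrite TE inE.
have [TM|nTM] := boolP (T \subset M).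
  right; exists #|T|.-1; rewrite geo_sset //; apply: sphere_he.
  rewrite prednK // card_gt0; apply/set0Pn.
  move: D0; rewrite /DT => /andP [_ /orP [/existsP [m /and3P [_ mT _]]|/existsP [u /existsP [v /and5P [_ uT _ _ _]]]]].
    by exists m.
  by exists u.
have [[p [pT pM pN]]|nB] := pselect (exists p, [/\ p \in T, p \notin M &
    forall q, q \in T -> e p q -> q \in M]).
  left; apply: (@cone_contr R V _ p) => //.
    exact: DT_dclosed.
  move=> S DS; apply: DT_add => // q qT pq _; exact: pN.
have U0 : exists u0, u0 \in T :\: M.
  move/fintype.subsetPn: nTM => [u uT uM]; exists u; by rewrite inE uM uT.
case: U0 => u0 u0U.
have Hng : forall p, p \in T :\: M -> exists q, q \in T :\: M /\ e p q.
  move=> p; rewrite inE => /andP [pM pT]; apply: contrapT => Hq; apply: nB.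
  exists p; split => // q qT pq; apply: contrapT => /negP qM; apply: Hq.
  by exists q; rewrite inE qM qT.
have [l [z [lU zU lz lq]]] := forest_leaf eirr nc u0U Hng.
move: (lU) (zU); rewrite !inE => /andP [lM lT] /andP [zM zT].
have zl : z != l by apply: contraTneq lz => ->; rewrite eirr.
have Hl : forall q, q \in T -> e l q -> q != z -> q \in M.
  move=> q qT lq' qz; apply: contraNT qz => qM; apply/eqP; apply: lq => //.
  by rewrite inE qM qT.
have he1 := move_he R esym eirr zT lT zl zM lM Hl.
have cT' : (#|T :\ z| <= n)%N.
  by move: cT; rewrite (cardsD1 z T) zT.
have D0' : DT e (T :\ z) (M :|: [set q | e z q]) (@finset.set0 V).
  by rewrite DT_restr //; apply: finset.sub0set.
case: (IH _ _ cT' D0') => [Hc|[k Hk]].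
  by left; exact: he_trans he1 Hc.
by right; exists k; exact: he_trans he1 Hk.
Qed.
End Main.

Theorem corollary4p3 (R : realType) (V : finType) (e : rel V) :
  forest e -> has_edge e ->
  contractible R (geom_realization R (non_cover_complex e)) \/
  exists k : nat,
    homotopy_equivalent R (geom_realization R (non_cover_complex e)) (sphere R k).
Proof.
move=> [[esym eirr] nc] [u [v uv]].
have -> : non_cover_complex e = DT e [set: V] (@finset.set0 V).
  apply: funext => S; rewrite /non_cover_complex /DT finset.subsetT /=.
  apply/idP/idP.
    move=> /existsP [a /existsP [b /and3P [ab aS bS]]].
    by apply/orP; right; apply/existsP; exists a; apply/existsP; exists b; rewrite ab aS bS !inE.
  case/orP => [/existsP [m]|/existsP [a /existsP [b /and5P [ab _ _ aS bS]]]].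
    by rewrite inE.
  by apply/existsP; exists a; apply/existsP; exists b; rewrite ab aS bS.
have D0 : DT e [set: V] (@finset.set0 V) (@finset.set0 V).
  apply/andP; split; first exact: finset.sub0set.
  by apply/orP; right; apply/existsP; exists u; apply/existsP; exists v; rewrite uv !inE.
exact: (@main_ind R V e esym eirr nc #|V| [set: V] (@finset.set0 V) (max_card _) D0).
Qed.
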